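(* Let $f(\mathbf{x})=\mathbf{x}^{T}A\mathbf{x}+b^{T}\mathbf{x}+1$ with $A\in\mathbb{R}^{n\times n}$ symmetric and $b\in\mathbb{R}^n$. If $A_1,\dots,A_n$ and $B_1,\dots,B_n$ are real symmetric $2\times 2$ matrices with $f(\mathbf{x})=\det(I_2+\sum_j x_jA_j)=\det(I_2+\sum_j x_jB_j)$ for all $\mathbf{x}\in\mathbb{R}^n$, then there exists a real orthogonal $2\times 2$ matrix $V$ with $V^{T}A_jV=B_j$ for all $j=1,\dots,n$. *)

(* Defs.v *)
From HB Require Import structures.
From mathcomp Require Import all_boot all_order all_algebra.
Set Implicit Arguments. Unset Strict Implicit. Unset Printing Implicit Defensive.
Import Order.TTheory GRing.Theory Num.Theory.
Local Open Scope ring_scope.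

Definition quad_f (R : comRingType) (n : nat) (A : 'M[R]_n) (b : 'cV[R]_n)
  (x : 'cV[R]_n) : R :=
  (x^T *m A *m x) 0 0 + (b^T *m x) 0 0 + 1.

Definition lmp_det (R : comRingType) (n : nat) (As : 'I_n -> 'M[R]_2)
  (x : 'cV[R]_n) : R :=
  \det (1%:M + \sum_(j < n) x j 0 *: As j).

(* Main.v *)
Require Import Defs.
From HB Require Import structures.
From mathcomp Require Import all_boot all_order all_algebra.
From mathcomp Require Import ring lra.
Import Order.TTheory GRing.Theory Num.Theory.
Set Implicit Arguments. Unset Strict Implicit.
Local Open Scope ring_scope.
Lemma det2 (R : comNzRingType) (M : 'M[R]_2) : \det M = M 0 0 * M 1 1 - M 0 1 * M 1 0.
Proof.
rewrite (expand_det_row _ 0) !big_ord_recl big_ord0 /cofactor !det_mx11 !mxE /=.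
have e1 : lift (0 : 'I_2) (0 : 'I_1) = 1 :> 'I_2 by apply/val_inj.
have e0 : ord0 = 0 :> 'I_2 by apply/val_inj.
have e2 : lift ord0 (ord0 : 'I_1) = 1 :> 'I_2 by apply/val_inj.
have e3 : lift (lift (0:'I_2) (ord0:'I_1)) (0 : 'I_1) = 0 :> 'I_2 by apply/val_inj.
have e4 : lift (1:'I_2) (0 : 'I_1) = 0 :> 'I_2 by apply/val_inj.
rewrite ?e1 ?e0 ?e2 ?e3 /= expr0 expr1 addr0 e4. ring.
Qed.

Lemma sum_delta (R : comNzRingType) n (As : 'I_n -> 'M[R]_2) j :
  \sum_(i < n) ((i == j) && (0 == 0 :> 'I_1))%:R *: As i = As j.
Proof.
rewrite (bigD1 j) //= big1 ?addr0 => [|i /negbTE ne]; rewrite ?eqxx ?ne /=.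
  by rewrite scale1r.
by rewrite scale0r.
Qed.

Lemma lmp_lin (R : comNzRingType) n (As : 'I_n -> 'M[R]_2) j k s u :
  lmp_det As (s *: delta_mx j 0 + u *: delta_mx k 0) = \det (1%:M + (s *: As j + u *: As k)).
Proof.
rewrite /lmp_det; congr (\det (_ + _)).
under eq_bigr => i _ do rewrite !mxE scalerDl -!scalerA.
by rewrite big_split /= -!scaler_sumr !sum_delta.
Qed.

Lemma det_form (R : comNzRingType) (M N : 'M[R]_2) s u : M^T = M -> N^T = N ->
  \det (1%:M + (s *: M + u *: N)) =
  (1 + s * M 0 0 + u * N 0 0) * (1 + s * M 1 1 + u * N 1 1) - (s * M 0 1 + u * N 0 1)^+2.
Proof.
move=> hM hN.
have sM : M 1 0 = M 0 1 by rewrite -[in LHS]hM mxE.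
have sN : N 1 0 = N 0 1 by rewrite -[in LHS]hN mxE.
rewrite det2 !mxE /= sM sN. ring.
Qed.
Lemma sum2 (R : nmodType) (F : 'I_2 -> R) : \sum_(i < 2) F i = F 0 + F 1.
Proof. rewrite big_ord_recl big_ord1; congr (_ + F _); exact/val_inj. Qed.
Lemma ord2P (i : 'I_2) : i = 0 \/ i = 1.
Proof. case: i => [[|[|m]]] Hi; [left|right|by []]; exact/val_inj. Qed.
Lemma lin4 (R : comNzRingType) (X Y l1 r1 l2 r2 l3 r3 l4 r4 k1 k2 k3 k4 : R) :
  l1 = r1 -> l2 = r2 -> l3 = r3 -> l4 = r4 ->
  X - Y = k1 * (l1 - r1) + k2 * (l2 - r2) + k3 * (l3 - r3) + k4 * (l4 - r4) -> X = Y.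
Proof.
move=> -> -> -> ->; rewrite !subrr !mulr0 !addr0 => /eqP; rewrite subr_eq0 => /eqP //.
Qed.
Lemma lin3 (R : comNzRingType) (X Y l1 r1 l2 r2 l3 r3 k1 k2 k3 : R) :
  l1 = r1 -> l2 = r2 -> l3 = r3 ->
  X - Y = k1 * (l1 - r1) + k2 * (l2 - r2) + k3 * (l3 - r3) -> X = Y.
Proof.
move=> -> -> ->; rewrite !subrr !mulr0 !addr0 => /eqP; rewrite subr_eq0 => /eqP //.
Qed.

Definition Vmx {R : nzRingType} (al be sg : R) : 'M[R]_2 :=
  \matrix_(i < 2, j < 2) if i == 0 then (if j == 0 then al else - (sg * be))
                         else (if j == 0 then be else sg * al).

Lemma Vorth (R : comNzRingType) (al be sg : R) :
  al^+2 + be^+2 = 1 -> sg^+2 = 1 -> (Vmx al be sg)^T *m Vmx al be sg = 1%:M.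
Proof.
move=> h1 h2; apply/matrixP => i j; rewrite !mxE sum2 !mxE.
case: (ord2P i) => ->; case: (ord2P j) => -> /=.
- by rewrite -h1; ring.
- ring.
- ring.
- rewrite -h1. transitivity (sg^+2 * (al^+2 + be^+2)); first ring. by rewrite h1 h2 mulr1.
Qed.

Lemma Vconj (R : fieldType) (al be sg : R) (M N : 'M[R]_2) :
  M^T = M -> N^T = N ->
  al^+2 + be^+2 = 1 -> sg^+2 = 1 ->
  (al^+2 - be^+2) * (M 0 0 - M 1 1) + 2 * al * be * (2 * M 0 1) = N 0 0 - N 1 1 ->
  sg * ((al^+2 - be^+2) * (2 * M 0 1) - 2 * al * be * (M 0 0 - M 1 1)) = 2 * N 0 1 ->
  M 0 0 + M 1 1 = N 0 0 + N 1 1 ->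
  (2 : R) != 0 ->
  (Vmx al be sg)^T *m M *m Vmx al be sg = N.
Proof.
move=> hM hN h1 h2 e1 e2 e3 two.
have sM : M 1 0 = M 0 1 by rewrite -[in LHS]hM mxE.
have sN : N 1 0 = N 0 1 by rewrite -[in LHS]hN mxE.
apply/matrixP => i j; rewrite !mxE !sum2 !mxE.
case: (ord2P i) => ->; case: (ord2P j) => -> /=; rewrite !sum2 !mxE /= ?sM ?sN.
- apply: (lin3 (k1 := (M 0 0 + M 1 1)/2) (k2 := 1/2) (k3 := 1/2) h1 e1 e3).
  by field.
- apply: (lin3 (k1 := 1/2) (k2 := 0) (k3 := 0) e2 e2 e2). by field.
- apply: (lin3 (k1 := 1/2) (k2 := 0) (k3 := 0) e2 e2 e2). by field.
- apply: (lin4 (k1 := (M 0 0 + M 1 1)/2) (k2 := -1/2) (k3 := 1/2)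
     (k4 := ((al^+2 + be^+2) * (M 0 0 + M 1 1) - ((al ^+ 2 - be ^+ 2) * (M 0 0 - M 1 1) + 2 * al * be * (2 * M 0 1)))/2) h1 e1 e3 h2).
  by field.
Qed.
Lemma lin2 (R : comNzRingType) (X Y l1 r1 l2 r2 k1 k2 : R) :
  l1 = r1 -> l2 = r2 -> 
  X - Y = k1 * (l1 - r1) + k2 * (l2 - r2) -> X = Y.
Proof.
move=> -> ->; rewrite !subrr !mulr0 !addr0 => /eqP; rewrite subr_eq0 => /eqP //.
Qed.

Lemma half (R : rcfType) (g d : R) : g^+2 + d^+2 = 1 ->
  exists al be : R, [/\ al^+2 + be^+2 = 1, al^+2 - be^+2 = g & 2 * al * be = d].
Proof.
move=> h.
have [eg|hg] := eqVneq g (-1).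
  move: h; rewrite eg sqrrN expr1n => h.
  have : d^+2 = 0 by lra.
  move/eqP; rewrite sqrf_eq0 => /eqP d0.
  exists 0, 1; rewrite d0; split; ring.
have hpos : 0 < (1 + g) / 2.
  have : -1 <= g by nra.
  rewrite le_eqVlt eq_sym (negbTE hg) /= => hl. lra.
have hg1 : 1 + g != 0 by lra.
set al := Num.sqrt ((1 + g) / 2).
have ha : al^+2 = (1 + g) / 2 by rewrite sqr_sqrtr // ltW.
have ha0 : al != 0 by rewrite sqrtr_eq0 -ltNge.
exists al, (d / (2 * al)); split; rewrite ?expr_div_n ?exprMn ?ha.
- apply: (lin2 (k1 := 1 / (2 * (1 + g))) (k2 := 0) h h).
  by field.
- apply: (lin2 (k1 := - 1 / (2 * (1 + g))) (k2 := 0) h h).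
  by field.
- by field.
Qed.
Lemma core2 (R : rcfType) n (a c a' c' : 'I_n -> R) :
  (forall j k, a j * a k + c j * c k = a' j * a' k + c' j * c' k) ->
  exists g d s : R, [/\ g^+2 + d^+2 = 1, s^+2 = 1 &
     forall j, g * a j + d * c j = a' j /\ s * (g * c j - d * a j) = c' j].
Proof.
move=> G.
have [/existsP [j0 hj0] | hall] := boolP [exists j, a j * a j + c j * c j != 0]; last first.
  have z : forall j, [/\ a j = 0, c j = 0, a' j = 0 & c' j = 0].
    move=> j; have := G j j; rewrite negb_exists in hall.
    have h0 : a j * a j + c j * c j = 0.
      by have := forallP hall j; rewrite negbK => /eqP.
    move=> e; split; nra.
  exists 1, 0, 1; split; [ring | ring | move=> j; have [-> -> -> ->] := z j; split; ring].
set N0 := a j0 * a j0 + c j0 * c j0.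
have hN := G j0 j0.
pose w j := a j0 * c j - c j0 * a j.
pose w' j := a' j0 * c' j - c' j0 * a' j.
have L : forall j k, w j * w k = w' j * w' k.
  move=> j k.
  have -> : w j * w k = (a j0 * a j0 + c j0 * c j0) * (a j * a k + c j * c k)
     - (a j0 * a j + c j0 * c j) * (a j0 * a k + c j0 * c k) by rewrite /w; ring.
  rewrite !G /w'; ring.
have [s [hs hw]] : exists s : R, s^+2 = 1 /\ forall j, w' j = s * w j.
  have [/forallP hf | /forallP hf] := boolP [forall j, w' j == w j].
    by exists 1; split; [ring | move=> j; rewrite mul1r; apply/eqP].
  have [k hk] : exists k, w' k != w k.
    by apply/existsP; rewrite -negb_forall; apply/negP => /forallP.
  have hk2 : w' k = - w k.
    have := L k k => e.
    have : (w' k - w k) * (w' k + w k) = 0.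
      by rewrite (_ : _ * _ = w' k * w' k - w k * w k); [rewrite e subrr | ring].
    move/eqP; rewrite mulf_eq0 subr_eq0 (negbTE hk) /= addr_eq0 => /eqP //.
  have wk0 : w k != 0 by apply: contra hk => /eqP wk; rewrite hk2 wk oppr0.
  exists (-1); split; first ring.
  move=> j; have := L j k; rewrite hk2 => e.
  have : (w' j + w j) * w k = 0 by rewrite mulrDl e; ring.
  move/eqP; rewrite mulf_eq0 (negbTE wk0) orbF addr_eq0 => /eqP ->; ring.
set a0 := a j0. set c0 := c j0. set a0' := a' j0. set c0' := c' j0.
set N := a0 * a0 + c0 * c0.
exists ((a0 * a0' + s * c0 * c0') / N), ((c0 * a0' - s * a0 * c0') / N), s.
split => //.
  apply: (lin4 (k1 := -1/N) (k2 := c0'^+2 / N) (k3 := 0) (k4 := 0) hN hs hs hs).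
  rewrite /N /a0 /c0 /a0' /c0'; field; exact: hj0.
move=> j; have Gj := G j0 j; have hwj := hw j; rewrite /w /w' in hwj; split.
  apply: (lin4 (k1 := a0'/N) (k2 := c0'/N) (k3 := - a' j / N) (k4 := 0) Gj hwj hN hN).
  rewrite /N /a0 /c0 /a0' /c0'; field; exact: hj0.
apply: (lin4 (k1 := - a0'/N) (k2 := c0' * (a0 * a j + c0 * c j)/N) (k3 := c0'/N) (k4 := - c' j / N) hwj hs Gj hN).
rewrite /N /a0 /c0 /a0' /c0'; field; exact: hj0.
Qed.

Theorem mainTheorem4 (R : rcfType) (n : nat) (A : 'M[R]_n) (b : 'cV[R]_n)
  (As Bs : 'I_n -> 'M[R]_2) :
  A^T = A ->
  (forall j, (As j)^T = As j) ->
  (forall j, (Bs j)^T = Bs j) ->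
  (forall x : 'cV[R]_n,
      quad_f A b x = lmp_det As x /\ quad_f A b x = lmp_det Bs x) ->
  exists V : 'M[R]_2,
    V^T *m V = 1%:M /\ (forall j, V^T *m As j *m V = Bs j).
Proof.
move=> _ hAs hBs H.
have key : forall s u j k,
  (1 + s * As j 0 0 + u * As k 0 0) * (1 + s * As j 1 1 + u * As k 1 1) - (s * As j 0 1 + u * As k 0 1)^+2 =
  (1 + s * Bs j 0 0 + u * Bs k 0 0) * (1 + s * Bs j 1 1 + u * Bs k 1 1) - (s * Bs j 0 1 + u * Bs k 0 1)^+2.
  move=> s u j k; rewrite -!det_form // -!lmp_lin.
  by have [<- <-] := H (s *: delta_mx j 0 + u *: delta_mx k 0).
have hT : forall j, As j 0 0 + As j 1 1 = Bs j 0 0 + Bs j 1 1.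
  by move=> j; have := key 1 0 j j; have := key (-1) 0 j j; lra.
have G : forall j k,
  (As j 0 0 - As j 1 1) * (As k 0 0 - As k 1 1) + (2 * As j 0 1) * (2 * As k 0 1) =
  (Bs j 0 0 - Bs j 1 1) * (Bs k 0 0 - Bs k 1 1) + (2 * Bs j 0 1) * (2 * Bs k 0 1).
  move=> j k.
  have h11 := key 1 1 j k; have hj1 := key 1 0 j j; have hk1 := key 1 0 k k.
  have hj2 := key (-1) 0 j j; have hk2 := key (-1) 0 k k.
  have eTj : Bs j 1 1 = As j 0 0 + As j 1 1 - Bs j 0 0 by have := hT j; lra.
  have eTk : Bs k 1 1 = As k 0 0 + As k 1 1 - Bs k 0 0 by have := hT k; lra.
  rewrite ?eTj ?eTk in h11 hj1 hk1 *.
  rewrite ?eTj ?eTk in h11 hj1 hk1 *.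
  lra.
have [g [d [s [hgd hs hj]]]] := core2 G.
have [al [be [h1 h2 h3]]] := half hgd.
exists (Vmx al be s); split; first exact: Vorth.
move=> j; have [e1 e2] := hj j.
apply: Vconj => //; rewrite ?h2 ?h3 //; last by rewrite pnatr_eq0.
Qed.
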